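(* Let $1\le k\le n$ and let $A$ be a real diagonal $n\times n$ positive definite matrix with trace $k$. Then $$\inf_{Y\ \text{Hermitian}}F_A(Y)=\inf_{Y\ \text{real diagonal}}F_A(Y),\qquad F_A(Y)=\langle Y,A\rangle+\log\int_{\mathcal P_k}e^{-\langle Y,X\rangle}d\mu_k(X).$$
   Context: $\mathcal P_k$ is the set of $n\times n$ rank-$k$ Hermitian PSD projections, $\mu_k$ the unique unitarily (conjugation-)invariant Borel probability measure on $\mathcal P_k$, and $\langle Y,X\rangle=\mathrm{Tr}(YX^* )$. *)

(* Defs.v *)
From HB Require Import structures.
From mathcomp Require Import all_boot all_order all_algebra.
From mathcomp Require Import complex.
From mathcomp Require Import all_classical all_reals all_analysis.
Set Implicit Arguments. Unset Strict Implicit. Unset Printing Implicit Defensive.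
Import Order.TTheory GRing.Theory Num.Theory.
Local Open Scope classical_set_scope.
Local Open Scope ring_scope.
Local Open Scope complex_scope.

Section Defs.
Variables (R : realType) (n : nat).

Definition ctrmx (m p : nat) (X : 'M[R[i]]_(m, p)) : 'M[R[i]]_(p, m) :=
  (map_mx (fun z : R[i] => z^*) X)^T.

Definition herm (X : 'M[R[i]]_n) : Prop := ctrmx X = X.

Definition psdmx (X : 'M[R[i]]_n) : Prop :=
  herm X /\ forall v : 'cV[R[i]]_n, 0 <= (ctrmx v *m X *m v) 0 0.
Definition posdefmx (X : 'M[R[i]]_n) : Prop :=
  herm X /\ forall v : 'cV[R[i]]_n, v != 0 -> 0 < (ctrmx v *m X *m v) 0 0.

Definition real_diag (X : 'M[R[i]]_n) : Prop :=
  is_diag_mx X /\ forall j, complex.Im (X j j) = 0.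

Definition unitarymx_c (U : 'M[R[i]]_n) : Prop := U *m ctrmx U = 1%:M.

Definition proj_rank (k : nat) (X : 'M[R[i]]_n) : Prop :=
  psdmx X /\ X *m X = X /\ \rank X = k.

(* <Y, X> = Tr (Y conj-transpose(X)), real part; it is real when X, Y are Hermitian *)
Definition inner (Y X : 'M[R[i]]_n) : R[i] := \tr (Y *m ctrmx X).

End Defs.

Definition cmat (R : realType) (n : nat) : Type := 'M[R[i]]_n.
HB.instance Definition _ (R : realType) (n : nat) := Choice.on (cmat R n).
HB.instance Definition _ (R : realType) (n : nat) := isPointed.Build (cmat R n) (0 : 'M[R[i]]_n).

Section Gen.
Variables (R : realType) (n : nat).

(* Borel sigma-algebra on n x n complex matrices: generated by the
   real and imaginary parts of the entries (coordinates). *)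
Definition cmx_gen : set (set (cmat R n)) :=
  [set A | exists (j l : 'I_n) (B : set R), measurable B /\
     (A = [set X : 'M[R[i]]_n | complex.Re (X j l) \in B] \/ A = [set X : 'M[R[i]]_n | complex.Im (X j l) \in B])].

End Gen.

Notation CMx R n := (g_sigma_algebraType (@cmx_gen R n)).

Definition F_A (R : realType) (n : nat) (mu : probability (CMx R n) R)
  (A Y : 'M[R[i]]_n) : \bar R :=
  ((complex.Re (inner Y A))%:E +
   (ln (fine (\int[mu]_(X in setT) (expR (- complex.Re (inner Y (X : 'M[R[i]]_n))))%:E)))%:E)%E.

(* Main.v *)
Require Import Defs.
From HB Require Import structures.
From mathcomp Require Import all_boot all_order all_algebra.
From mathcomp Require Import complex.
From mathcomp Require Import all_classical all_reals all_analysis.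
From mathcomp Require Import measurable_realfun ring lra.
Import Order.TTheory GRing.Theory Num.Theory.
Local Open Scope classical_set_scope.
Local Open Scope ring_scope.
Local Open Scope complex_scope.
Section S.
Variables (R : realType) (n : nat).
Local Notation T := (CMx R n).
Local Notation M := ('M[R[i]]_n).

Definition cmf (f : T -> R[i]) :=
  measurable_fun setT (fun X => complex.Re (f X)) /\
  measurable_fun setT (fun X => complex.Im (f X)).

Lemma cmf_entry (j l : 'I_n) : cmf (fun X : T => (X : M) j l).
Proof.
split=> _ B mB; rewrite setTI; apply: sub_gen_smallest;
  exists j, l, B; split => //; [left|right];
  apply/seteqP; split => X /=; by rewrite inE.
Qed.

Lemma cmf_cst c : cmf (fun _ => c).
Proof. by split; apply: measurable_cst. Qed.

Lemma cmf_add f g : cmf f -> cmf g -> cmf (fun X => f X + g X).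
Proof.
move=> [f1 f2] [g1 g2]; split.
- have -> : (fun X => complex.Re (f X + g X)) = (fun X => complex.Re (f X)) \+ (fun X => complex.Re (g X)).
    by apply/funext => X /=; case: (f X) => ??; case: (g X) => ?? /=.
  exact: measurable_realfun.measurable_funD.
- have -> : (fun X => complex.Im (f X + g X)) = (fun X => complex.Im (f X)) \+ (fun X => complex.Im (g X)).
    by apply/funext => X /=; case: (f X) => ??; case: (g X) => ?? /=.
  exact: measurable_realfun.measurable_funD.
Qed.

Lemma cmf_opp f : cmf f -> cmf (fun X => - f X).
Proof.
move=> [f1 f2]; split.
- have -> : (fun X => complex.Re (- f X)) = \- (fun X => complex.Re (f X)).
    by apply/funext => X /=; case: (f X) => ?? /=.
  exact: measurable_realfun.measurable_funN.
- have -> : (fun X => complex.Im (- f X)) = \- (fun X => complex.Im (f X)).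
    by apply/funext => X /=; case: (f X) => ?? /=.
  exact: measurable_realfun.measurable_funN.
Qed.

Lemma cmf_mul f g : cmf f -> cmf g -> cmf (fun X => f X * g X).
Proof.
move=> [f1 f2] [g1 g2]; split.
- have -> : (fun X => complex.Re (f X * g X)) =
    ((fun X => complex.Re (f X)) \* (fun X => complex.Re (g X))) \-
    ((fun X => complex.Im (f X)) \* (fun X => complex.Im (g X))).
    by apply/funext => X /=; case: (f X) => ??; case: (g X) => ?? /=.
  by apply: measurable_realfun.measurable_funB; apply: measurable_realfun.measurable_funM.
- have -> : (fun X => complex.Im (f X * g X)) =
    ((fun X => complex.Re (f X)) \* (fun X => complex.Im (g X))) \+
    ((fun X => complex.Im (f X)) \* (fun X => complex.Re (g X))).
    by apply/funext => X /=; case: (f X) => ??; case: (g X) => ?? /=.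
  by apply: measurable_realfun.measurable_funD; apply: measurable_realfun.measurable_funM.
Qed.

Lemma cmf_conj f : cmf f -> cmf (fun X => (f X)^*).
Proof.
move=> [f1 f2]; split.
- have -> : (fun X => complex.Re ((f X)^*)) = (fun X => complex.Re (f X)).
    by apply/funext => X /=; case: (f X) => ?? /=.
  by [].
- have -> : (fun X => complex.Im ((f X)^*)) = \- (fun X => complex.Im (f X)).
    by apply/funext => X /=; case: (f X) => ?? /=.
  exact: measurable_realfun.measurable_funN.
Qed.

Lemma cmf_sum (I : Type) (s : seq I) (h : I -> T -> R[i]) :
  (forall i, cmf (h i)) -> cmf (fun X => \sum_(i <- s) h i X).
Proof.
move=> hh; elim: s => [|a s [IH1 IH2]].
  have -> : (fun X => \sum_(i <- [::]) h i X) = fun _ => 0 by apply/funext => X; rewrite big_nil.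
  exact: cmf_cst.
have -> : (fun X => \sum_(i <- a :: s) h i X) = fun X => h a X + \sum_(i <- s) h i X.
  by apply/funext => X; rewrite big_cons.
exact: cmf_add.
Qed.

Definition cmm (G : T -> M) := forall j l, cmf (fun X => G X j l).

Lemma cmm_id : cmm (fun X => X).
Proof. by move=> j l; apply: cmf_entry. Qed.
Lemma cmm_cst C : cmm (fun _ => C).
Proof. by move=> j l; apply: cmf_cst. Qed.
Lemma cmm_mul G H : cmm G -> cmm H -> cmm (fun X => G X *m H X).
Proof.
move=> hG hH j l.
have -> : (fun X => (G X *m H X) j l) = (fun X => \sum_(u < n) G X j u * H X u l).
  by apply/funext => X; rewrite mxE.
by apply: cmf_sum => u; apply: cmf_mul.
Qed.
Lemma cmm_add G H : cmm G -> cmm H -> cmm (fun X => G X + H X).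
Proof.
move=> hG hH j l.
have -> : (fun X => (G X + H X) j l) = (fun X => G X j l + H X j l).
  by apply/funext => X; rewrite mxE.
exact: cmf_add.
Qed.
Lemma cmm_ctr G : cmm G -> cmm (fun X => ctrmx (G X)).
Proof.
move=> hG j l.
have -> : (fun X => ctrmx (G X) j l) = (fun X => (G X l j)^*).
  by apply/funext => X; rewrite !mxE.
exact: cmf_conj.
Qed.
Lemma cmf_tr G : cmm G -> cmf (fun X => \tr (G X)).
Proof. by move=> hG; apply: cmf_sum => u; apply: hG. Qed.

Lemma cmf_eq0 f : cmf f -> measurable [set X | f X = 0].
Proof.
move=> [f1 f2].
have -> : [set X | f X = 0] = ((fun X => complex.Re (f X)) @^-1` [set 0]) `&`
   ((fun X => complex.Im (f X)) @^-1` [set 0]).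
  apply/seteqP; split => X /=.
    by move=> ->.
  by case: (f X) => a b /= [-> ->].
apply: measurableI.
  by rewrite -(setTI (_ @^-1` _)); apply: f1 => //; apply: measurable_set1.
by rewrite -(setTI (_ @^-1` _)); apply: f2 => //; apply: measurable_set1.
Qed.

Lemma cmm_eq G H : cmm G -> cmm H -> measurable [set X | G X = H X].
Proof.
move=> hG hH.
pose d X := fun j l => G X j l - H X j l.
have -> : [set X | G X = H X] =
   [set X | \sum_(j < n) \sum_(l < n) (d X j l * (d X j l)^*) = 0].
  apply/seteqP; split => X /=.
    by move=> e; apply: big1 => j _; apply: big1 => l _; rewrite /d e subrr mul0r.
  move/eqP; rewrite psumr_eq0; last by move=> j _; apply: sumr_ge0 => l _; exact: mulcJ_ge0.
  move/allP => h; apply/matrixP => j l; apply/eqP; rewrite -subr_eq0.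
  have := h j (mem_index_enum _); rewrite /= psumr_eq0; last by move=> u _; exact: mulcJ_ge0.
  move/allP/(_ l (mem_index_enum _)) => /=.
  by rewrite mulf_eq0 conjc_eq0 orbb.
apply: cmf_eq0; apply: cmf_sum => j; apply: cmf_sum => l.
have hd : cmf (fun X => d X j l) by apply: cmf_add; [apply: hG| apply: cmf_opp; apply: hH].
by apply: cmf_mul => //; apply: cmf_conj.
Qed.


Lemma ctrmx_mul m p q (A : 'M[R[i]]_(m,p)) (B : 'M[R[i]]_(p,q)) :
  ctrmx (A *m B) = ctrmx B *m ctrmx A.
Proof. by rewrite /ctrmx map_mxM trmx_mul. Qed.

Lemma ctrmxK m p (A : 'M[R[i]]_(m,p)) : ctrmx (ctrmx A) = A.
Proof. by apply/matrixP => i j; rewrite !mxE conjcK. Qed.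

Lemma idem_rank_tr (X : M) : X *m X = X -> \tr X = (\rank X)%:R.
Proof.
move=> idX.
have eX : X = col_base X *m row_base X by rewrite mulmx_base.
have fD := row_base_free X; have fC := col_base_full X.
move: (col_base X) (row_base X) eX fD fC => C D eX fD fC.
have DC : D *m C = 1%:M.
  apply: (row_free_inj fD); rewrite mul1mx.
  apply: (row_full_inj fC).
  by rewrite !mulmxA -eX -mulmxA -eX idX.
by rewrite {1}eX mxtrace_mulC DC mxtrace1.
Qed.

Lemma herm_idem_psd (X : M) : herm X -> X *m X = X -> psdmx X.
Proof.
move=> hX idX; split => // v.
have -> : ctrmx v *m X *m v = ctrmx (X *m v) *m (X *m v).
  by rewrite ctrmx_mul hX -{1}idX !mulmxA.
rewrite mxE; apply: sumr_ge0 => i _; rewrite !mxE mulrC; exact: mulcJ_ge0.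
Qed.

Lemma proj_rankE k (X : M) :
  proj_rank k X <-> [/\ herm X, X *m X = X & \tr X = k%:R].
Proof.
split.
  by move=> [[hX _] [idX rk]]; split => //; rewrite idem_rank_tr // rk.
move=> [hX idX trX]; split; first exact: herm_idem_psd.
by split => //; apply/eqP; rewrite -(eqr_nat R[i]) -idem_rank_tr // trX.
Qed.

Lemma measurable_P k : measurable [set X : T | proj_rank k (X : M)].
Proof.
have -> : [set X : T | proj_rank k (X : M)] =
  [set X : T | ctrmx (X : M) = X] `&` [set X : T | (X : M) *m X = X] `&`
  [set X : T | \tr (X : M) - k%:R = 0].
  apply/seteqP; split => X /=.
    by move/proj_rankE => [h1 h2 h3]; rewrite h3 subrr.
  by move=> [[h1 h2] /eqP h3]; apply/proj_rankE; split => //; apply/eqP; rewrite -subr_eq0.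
apply: measurableI; first apply: measurableI.
- by apply: cmm_eq; [apply: cmm_ctr|]; apply: cmm_id.
- by apply: cmm_eq; [apply: cmm_mul|]; apply: cmm_id.
- by apply: cmf_eq0; apply: cmf_add; [apply: cmf_tr; apply: cmm_id|apply: cmf_cst].
Qed.


Lemma ReD (a b : R[i]) : complex.Re (a + b) = complex.Re a + complex.Re b.
Proof. by case: a; case: b. Qed.
Lemma Re0 : complex.Re (0 : R[i]) = 0.
Proof. by []. Qed.

Lemma inner_sum (Y X : M) :
  inner Y X = \sum_(j < n) \sum_(l < n) Y j l * (X j l)^*.
Proof. by rewrite /inner /mxtrace; apply: eq_bigr => j _; rewrite mxE; apply: eq_bigr => l _; rewrite !mxE. Qed.

Definition Cb (Y : M) : R :=
  \sum_(j < n) \sum_(l < n) (`|complex.Re (Y j l)| + `|complex.Im (Y j l)|).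

Lemma proj_entry_bound k (X : M) j l : proj_rank k X ->
  `|complex.Re (X j l)| <= 1 /\ `|complex.Im (X j l)| <= 1.
Proof.
move=> /proj_rankE [hX idX _].
have hc : forall p q, X q p = (X p q)^*.
  by move=> p q; rewrite -[in LHS]hX !mxE.
have ejj : X j j = \sum_(u < n) X j u * (X j u)^*.
  by rewrite -[in LHS]idX mxE; apply: eq_bigr => u _; rewrite (hc j u).
have Imjj : complex.Im (X j j) = 0.
  have := hc j j; case: (X j j) => a b /= [] ; lra.
set e := fun u => complex.Re (X j u) ^+ 2 + complex.Im (X j u) ^+ 2.
have eRe : complex.Re (X j j) = \sum_(u < n) e u.
  rewrite ejj (big_morph _ ReD Re0); apply: eq_bigr => u _.
  by rewrite /e; case: (X j u) => a b /=; ring.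
have e0 : forall u, 0 <= e u by move=> u; rewrite /e addr_ge0 // sqr_ge0.
have ele : forall u, e u <= complex.Re (X j j).
  by move=> u; rewrite eRe (bigD1 u) //= lerDl sumr_ge0.
have := ele j; rewrite /e Imjj => h1.
have := ele l; rewrite /e => h2.
have h3 : complex.Re (X j j) <= 1 by nra.
split; rewrite ler_norml; apply/andP; split; nra.
Qed.

Lemma inner_bound k (Y X : M) : proj_rank k X ->
  `|complex.Re (inner Y X)| <= Cb Y.
Proof.
move=> pX; rewrite inner_sum (big_morph _ ReD Re0).
apply: (le_trans (ler_norm_sum _ _ _)); apply: ler_sum => j _.
rewrite (big_morph _ ReD Re0).
apply: (le_trans (ler_norm_sum _ _ _)); apply: ler_sum => l _.
have [h1 h2] := proj_entry_bound _ _ j l pX.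
have -> : complex.Re (Y j l * (X j l)^*) =
  complex.Re (Y j l) * complex.Re (X j l) + complex.Im (Y j l) * complex.Im (X j l).
  by case: (Y j l) => a b; case: (X j l) => c d /=; ring.
apply: (le_trans (ler_normD _ _)); apply: lerD; rewrite normrM ler_piMr //.
Qed.

End S.
Arguments Cb {R n}.
Arguments inner_bound {R n k}.
Arguments cmf {R n}.
Arguments cmm {R n}.

Section S2.
Variables (R : realType) (n k : nat) (mu : probability (CMx R n) R).
Hypothesis mu_supp : mu [set X | ~ proj_rank k (X : 'M[R[i]]_n)] = 0%E.
Local Notation T := (CMx R n).
Local Notation M := ('M[R[i]]_n).

Definition fZ (Y : M) := fun X : T => (expR (- complex.Re (inner Y (X : M))))%:E.
Definition Zf (Y : M) := (\int[mu]_(X in setT) fZ Y X)%E.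

Lemma mfZ Y : measurable_fun [set: T] (fZ Y : T -> \bar R).
Proof.
apply/measurable_EFinP.
have h : @cmf R n (fun X : T => inner Y (X : M)).
  by apply: cmf_tr; apply: cmm_mul; [apply: cmm_cst| apply: cmm_ctr; apply: cmm_id].
apply: measurableT_comp; first exact: measurable_expR.
by apply: measurable_realfun.measurable_funN; exact: h.1.
Qed.

Local Notation P := [set X : T | proj_rank k (X : M)].

Lemma muP : mu P = 1%E.
Proof.
have mP := measurable_P R n k.
have := probability_setT mu; rewrite -(setUv P) measureU //; last first.
  - by apply/subsets_disjoint.
  - exact: measurableC.
move=> <-; rewrite [X in _ = _ + X](_ : _ = 0%E) ?adde0 //.

Qed.

Lemma Z_fin Y : exists r : R, 0 < r /\ Zf Y = r%:E.
Proof.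
have mP := measurable_P R n k.
have eZ : Zf Y = (\int[mu]_(X in P) fZ Y X)%E.
  rewrite /Zf -(setUv P) ge0_integral_setU //.
  all: try (by apply/disj_set2P/subsets_disjoint).
  all: try (by move=> x _; rewrite lee_fin expR_ge0).
  all: try (by rewrite setUv; exact: mfZ).
  all: try (exact: measurableC).
  rewrite [X in (_ + X)%E]null_set_integral ?adde0 //.
  - exact: measurableC.
  - by apply: measurable_funS (mfZ Y).
have up : (\int[mu]_(X in P) fZ Y X <= (expR (Cb Y))%:E)%E.
  apply: (@le_trans _ _ (\int[mu]_(X in P) (cst (expR (Cb Y))%:E) X)%E).
    apply: ge0_le_integral => //.
    all: try (by move=> x _; rewrite lee_fin expR_ge0).
    all: try (by apply: measurable_funS (mfZ Y)).
    move=> X PX; rewrite lee_fin ler_expR.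
    have := inner_bound Y X PX; rewrite ler_norml => /andP[h1 h2]; lra.
  rewrite integral_cst //.
  have -> : (mu : {measure set T -> \bar R}) P = 1%E by exact: muP.
  by rewrite mule1.
have lo : ((expR (- Cb Y))%:E <= \int[mu]_(X in P) fZ Y X)%E.
  apply: (@le_trans _ _ (\int[mu]_(X in P) (cst (expR (- Cb Y))%:E) X)%E).
    rewrite integral_cst //.
    have -> : (mu : {measure set T -> \bar R}) P = 1%E by exact: muP.
    by rewrite mule1.
  apply: ge0_le_integral => //.
  all: try (by move=> x _; rewrite lee_fin expR_ge0).
  all: try (by apply: measurable_funS (mfZ Y)).
  move=> X PX; rewrite lee_fin ler_expR.
  have := inner_bound Y X PX; rewrite ler_norml => /andP[h1 h2]; lra.
move: up lo; rewrite -eZ; case: (Zf Y) => [r| |] //= h1 h2.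
by exists r; split => //; move: h2; rewrite lee_fin; apply: lt_le_trans; exact: expR_gt0.
Qed.

End S2.
Arguments Zf {R n}.
Arguments fZ {R n}.
Arguments mfZ {R n}.
Arguments Z_fin {R n k mu}.

Section S3.
Variables (R : realType) (n : nat).
Local Notation T := (CMx R n).
Local Notation M := ('M[R[i]]_n).

Definition sg (m : nat) (p : 'I_n) : R[i] := if val p == m then -1 else 1.
Definition Sm (m : nat) : M := diag_mx (\row_p sg m p).

Lemma sg2 m p : sg m p * sg m p = 1.
Proof. by rewrite /sg; case: ifP; rewrite ?mulrNN mulr1. Qed.

Lemma conj_sg m p : (sg m p)^* = sg m p.
Proof. by rewrite /sg; case: ifP => _; rewrite ?rmorphN1 ?rmorph1. Qed.

Lemma ctrmx_S m : ctrmx (Sm m) = Sm m.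
Proof.
apply/matrixP => p q; rewrite !mxE.
case: (eqVneq p q) => [->|ne]; first by rewrite !mulr1n conj_sg.
by rewrite !mulr0n conjc0.

Qed.

Lemma unitary_S m : unitarymx_c (Sm m).
Proof.
rewrite /unitarymx_c ctrmx_S /Sm mul_diag_mx; apply/matrixP => p q; rewrite !mxE.
by case: (p == q); rewrite ?mulr1n ?mulr0n ?sg2 ?mulr0.
Qed.

Lemma SWS_entry m (W : M) p q : (Sm m *m W *m Sm m) p q = sg m p * W p q * sg m q.
Proof. by rewrite /Sm mul_mx_diag mul_diag_mx !mxE. Qed.

Lemma mphi m : measurable_fun [set: T]
  (fun X : T => (Sm m *m (X : M) *m ctrmx (Sm m) : T)).
Proof.
have h : cmm (fun X : T => Sm m *m (X : M) *m ctrmx (Sm m)).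
  by apply: cmm_mul; [apply: cmm_mul; [apply: cmm_cst|apply: cmm_id]|apply: cmm_cst].
apply: (@measurability _ _ T T _ _ (@cmx_gen R n)) => //.
move=> _ [B [j [l [B' [mB' hB]]]] <-].
case: hB => ->.
- have := (h j l).1 measurableT _ mB'.
  congr (measurable (_ `&` _)); apply/seteqP; split => X /=; by rewrite inE.
- have := (h j l).2 measurableT _ mB'.
  congr (measurable (_ `&` _)); apply/seteqP; split => X /=; by rewrite inE.
Qed.

Lemma inner_S m (W X : M) :
  inner (Sm m *m W *m Sm m) X = inner W (Sm m *m X *m ctrmx (Sm m)).
Proof.
rewrite /inner !ctrmx_mul ctrmxK ctrmx_S.
rewrite -!mulmxA [in LHS]mxtrace_mulC !mulmxA.
by [].
Qed.

Lemma half_C : (2^-1 : R[i]) = (2^-1 : R)%:C.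
Proof. by rewrite fmorphV rmorph_nat. Qed.

Lemma inner_mid (W W' X : M) :
  complex.Re (inner (2^-1 *: (W + W')) X) =
  2^-1 * (complex.Re (inner W X) + complex.Re (inner W' X)).
Proof.
rewrite /inner -scalemxAl mulmxDl mxtraceZ mxtraceD half_C.
by case: (\tr (W *m ctrmx X)) => a b; case: (\tr (W' *m ctrmx X)) => c d /=; ring.
Qed.

Lemma amgm (a b : R) :
  expR (- (2^-1 * (a + b))) <= 2^-1 * (expR (- a) + expR (- b)).
Proof.
have e1 : - (2^-1 * (a + b)) = - (a / 2) + - (b / 2) by field.
have e2 : - a = - (a / 2) + - (a / 2) by field.
have e3 : - b = - (b / 2) + - (b / 2) by field.
rewrite e1 e2 e3 !expRD.
set u := expR (- (a / 2)); set v := expR (- (b / 2)).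
have := sqr_ge0 (u - v); lra.
Qed.

End S3.
Arguments Sm {R n}.
Arguments sg {R n}.
Arguments inner_S {R n}.
Arguments mphi {R n}.
Arguments unitary_S {R n}.
Arguments ctrmx_S {R n}.
Arguments SWS_entry {R n}.
Arguments inner_mid {R n}.

Section S4.
Variables (R : realType) (n k : nat) (mu : probability (CMx R n) R).
Hypothesis mu_supp : mu [set X | ~ proj_rank k (X : 'M[R[i]]_n)] = 0%E.
Hypothesis mu_inv : forall U : 'M[R[i]]_n, unitarymx_c U ->
     forall B : set (CMx R n), measurable B ->
       mu ((fun X : CMx R n => (U *m (X : 'M[R[i]]_n) *m ctrmx U : CMx R n)) @^-1` B)
       = mu B.
Local Notation T := (CMx R n).
Local Notation M := ('M[R[i]]_n).

Lemma Zf_S m (W : M) : Zf mu (Sm m *m W *m Sm m) = Zf mu W.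
Proof.
rewrite /Zf.
pose phi := fun X : T => (Sm m *m (X : M) *m ctrmx (Sm m) : T).
have mp : measurable_fun [set: T] phi := mphi m.
transitivity (\int[mu]_(X in phi @^-1` setT) (fZ W \o phi) X)%E.
  by rewrite preimage_setT; apply: eq_integral => X _; rewrite /fZ /= inner_S.
have pos : {in [set: T], forall y, (0 <= fZ W y)%E}.
  by move=> x _; rewrite lee_fin expR_ge0.
have E := ge0_integral_pushforward mp mu measurableT (mfZ W) pos.
refine (etrans (esym E) _).
apply: eq_measure_integral => A mA _.
exact: (mu_inv (Sm m) (unitary_S m) A mA).
Qed.

Lemma Zf_step m (W : M) :
  (Zf mu (2^-1 *: (W + Sm m *m W *m Sm m)) <= Zf mu W)%E.
Proof.
set W' := Sm m *m W *m Sm m.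
have [r [r0 ZW]] := Z_fin mu_supp W.
have ZW' : Zf mu W' = r%:E by rewrite /W' Zf_S.
rewrite /Zf.
apply: (@le_trans _ _ (\int[mu]_(X in setT) ((2^-1)%:E * (fZ W X + fZ W' X)))%E).
  apply: ge0_le_integral => //.
  all: try (by move=> x _; rewrite lee_fin expR_ge0).
  all: try exact: mfZ.
  all: try (by apply: measurable_funeM; apply: emeasurable_funD; exact: mfZ).
  all: try (move=> x _; apply: mule_ge0; first (by rewrite lee_fin invr_ge0);
    by apply: adde_ge0; rewrite lee_fin expR_ge0).
  move=> X _; rewrite /fZ inner_mid -EFinD -EFinM lee_fin.
  exact: amgm.
rewrite ge0_integralZl //.
all: try (by rewrite lee_fin invr_ge0).
all: try (by move=> x _; apply: adde_ge0; rewrite lee_fin expR_ge0).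
all: try (by apply: emeasurable_funD; exact: mfZ).
rewrite ge0_integralD //.
all: try exact: mfZ.
all: try (by move=> x _; rewrite lee_fin expR_ge0).
rewrite -/(Zf mu W) -/(Zf mu W') ZW ZW' -EFinD -EFinM lee_fin.
lra.
Qed.

End S4.

Section S5.
Variables (R : realType) (n : nat).
Local Notation M := ('M[R[i]]_n).

Definition Tm (m : nat) (Y : M) : M :=
  \matrix_(p, q) (if (p == q) || ((m <= p) && (m <= q))%N then Y p q else 0).

Lemma T0 Y : Tm 0 Y = Y.
Proof. by apply/matrixP => p q; rewrite mxE !leq0n orbT. Qed.

Lemma half_add (x : R[i]) : 2^-1 * (x + x) = x.
Proof.
by field.
Qed.

Lemma Tstep m Y : Tm m.+1 Y = 2^-1 *: (Tm m Y + Sm m *m Tm m Y *m Sm m).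
Proof.
apply/matrixP => p q; rewrite [in RHS]mxE [in RHS]mxE SWS_entry !mxE /sg.
case: (eqVneq p q) => [<-|npq] /=.
  by rewrite mulrAC; case: ifP => _; rewrite ?mulrNN !mul1r half_add.
case: ltngtP => hp; case: ltngtP => hq //=.
all: try by rewrite !(mul0r, mulr0, add0r, addr0).
all: try by rewrite ?mul1r ?mulr1 ?mulN1r ?mulrN1 ?subrr ?mulr0 ?half_add.
all: try by rewrite mulN1r mulrN1 opprK half_add.
by case/eqP: npq; apply: val_inj => /=; rewrite -hp -hq.
Qed.

End S5.
Arguments Tm {R n}.

Section S6.
Variables (R : realType) (n k : nat) (mu : probability (CMx R n) R).
Hypothesis mu_supp : mu [set X | ~ proj_rank k (X : 'M[R[i]]_n)] = 0%E.
Hypothesis mu_inv : forall U : 'M[R[i]]_n, unitarymx_c U ->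
     forall B : set (CMx R n), measurable B ->
       mu ((fun X : CMx R n => (U *m (X : 'M[R[i]]_n) *m ctrmx U : CMx R n)) @^-1` B)
       = mu B.
Local Notation M := ('M[R[i]]_n).

Lemma Zf_chain m (Y : M) : (Zf mu (Tm m Y) <= Zf mu Y)%E.
Proof.
elim: m => [|m IH].
  by rewrite T0.
rewrite Tstep; apply: (le_trans _ IH); exact: (@Zf_step R n k mu mu_supp mu_inv).
Qed.

Lemma inner_diagA (Y A : M) : is_diag_mx A ->
  inner Y A = \sum_(j < n) Y j j * (A j j)^*.
Proof.
move/is_diag_mxP => dA; rewrite inner_sum; apply: eq_bigr => j _.
rewrite (bigD1 j) //= [X in _ + X]big1 ?addr0 //.
move=> l /= nl.
rewrite dA; first by apply/eqP; rewrite mulf_eq0 conjc_eq0 eqxx orbT.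
by rewrite eq_sym.
Qed.

Lemma T_diag m (Y : M) j : Tm m Y j j = Y j j.
Proof. by rewrite mxE eqxx. Qed.

Lemma F_T (A : M) (Y : M) : is_diag_mx A ->
  (F_A mu A (Tm n Y) <= F_A mu A Y)%E.
Proof.
move=> dA.
have eq1 : inner (Tm n Y) A = inner Y A.
  by rewrite !inner_diagA //; apply: eq_bigr => j _; rewrite T_diag.
rewrite /F_A eq1; apply: leeD; first exact: lexx.
rewrite lee_fin.
have [r1 [r10 e1]] := Z_fin mu_supp (Tm n Y).
have [r2 [r20 e2]] := Z_fin mu_supp Y.
have := Zf_chain n Y; rewrite e1 e2 lee_fin => h.
change (ln (fine (Zf mu (Tm n Y))) <= ln (fine (Zf mu Y))).
rewrite e1 e2 /=.
by rewrite ler_ln ?posrE.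
Qed.

End S6.

Lemma herm_diagT (R : realType) (n : nat) (Y : 'M[R[i]]_n) : herm Y -> real_diag (Tm n Y).
Proof.
move=> hY; split.
  apply/is_diag_mxP => p q npq.
  have npq' : p != q by apply: contra npq => /eqP ->.
  rewrite mxE (negbTE npq') /=.
  by rewrite leqNgt ltn_ord.
move=> j; rewrite T_diag.
have := congr1 (fun M : 'M[R[i]]_n => M j j) hY; rewrite /= !mxE.
case: (Y j j) => a b /= [] ; lra.
Qed.

Lemma real_diag_herm (R : realType) (n : nat) (Y : 'M[R[i]]_n) : real_diag Y -> herm Y.
Proof.
move=> [/is_diag_mxP dY hI]; apply/matrixP => p q; rewrite !mxE.
case: (eqVneq p q) => [<-|npq].
  by move: (hI p); case: (Y p p) => a b /= ->; rewrite oppr0.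
by rewrite !dY ?conjc0 // eq_sym.
Qed.

Theorem mainTheorem19 (R : realType) (n k : nat)
  (mu : probability (CMx R n) R)
  (mu_supp : mu [set X | ~ proj_rank k (X : 'M[R[i]]_n)] = 0%E)
  (mu_inv : forall U : 'M[R[i]]_n, unitarymx_c U ->
     forall B : set (CMx R n), measurable B ->
       mu ((fun X : CMx R n => (U *m (X : 'M[R[i]]_n) *m ctrmx U : CMx R n)) @^-1` B)
       = mu B)
  (A : 'M[R[i]]_n) :
  (1 <= k <= n)%N ->
  real_diag A -> posdefmx A -> \tr A = k%:R ->
  ereal_inf [set F_A mu A Y | Y in [set Y | herm Y]]
  = ereal_inf [set F_A mu A Y | Y in [set Y | real_diag Y]].
Proof.
move=> _ [dA _] _ _.
apply/eqP; rewrite eq_le; apply/andP; split.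
  apply: le_ereal_inf => _ [Y hY <-]; exists Y => //; exact: real_diag_herm.
apply: le_ereal_inf_tmp => _ [Y hY <-].
apply: ge_ereal_inf; exists (F_A mu A (Tm n Y)).
  by exists (Tm n Y) => //; exact: herm_diagT.
exact: (@F_T R n k mu mu_supp mu_inv A Y dA).
Qed.
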